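(* Let $z^0\in X$ and let $\{\sigma_k\},\{\eta_k\},\{\delta_k\}$ be nonnegative sequences with $\sum_k\eta_k<\infty$, $\inf_k\sigma_k>0$, $\sup_k\delta_k<1$, and let $z^{k+1}$ be an output of IGPPAstep$(z^k,\sigma_k,\eta_k,\delta_k,\gamma,M)$ for all $k\ge0$, where $\gamma\in(0,2)$. Assume $T$ satisfies the bounded metric subregularity condition, let $\bar z^0$ be a point of $\Omega$ nearest to $z^0$ in $\|\cdot\|_M$, let $r>0$ satisfy $r\ge\|\bar z^0\|+\frac{1}{\lambda_{\min}(M)}\big(\operatorname{dist}_M(z^0,\Omega)+\gamma\sum_{k\ge0}\eta_k\big)$, and let $\kappa_r>0$ be such that $\operatorname{dist}(z,\Omega)\le\kappa_r\operatorname{dist}(0,T(z))$ whenever $\|z\|\le r$. Then for every $k\ge0$, $$\operatorname{dist}_M(z^{k+1},\Omega)\le\rho_k\operatorname{dist}_M(z^k,\Omega),\quad \rho_k:=\frac{1}{1-\delta_k}\Big(\sqrt{1-\frac{\min\{\gamma,2\gamma-\gamma^2\}\sigma_k^2}{\sigma_k^2+\kappa_r^2}}+\delta_k\Big(\frac{\min\{\gamma,1\}\kappa_r}{\sqrt{\sigma_k^2+\kappa_r^2}}+1\Big)\Big).$$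
   Context: $X$ is a finite-dimensional real Hilbert space with inner product $\langle\cdot,\cdot\rangle$ and norm $\|\cdot\|$; $T:X\rightrightarrows X$ is maximal monotone and $\Omega:=T^{-1}(0)$ is nonempty. $M$ is a self-adjoint positive definite linear operator on $X$ with $\lambda_{\max}(M)=1$; $\|z\|_M=\sqrt{\langle z,Mz\rangle}$, $\operatorname{dist}_M(z,D)=\min_{d\in D}\|d-z\|_M$, $\operatorname{dist}=\operatorname{dist}_I$. For $\sigma>0$, $\mathcal{J}_{\sigma M^{-1}T}:=(I+\sigma M^{-1}T)^{-1}$. A point $z^+$ is an output of IGPPAstep$(z,\sigma,\eta,\delta,\gamma,M)$ if $z^+=\gamma w+(1-\gamma)z$ for some $w$ with $\|w-\mathcal{J}_{\sigma M^{-1}T}(z)\|_M\le\min\{\eta,\delta\|w-z\|_M\}$. Bounded metric subregularity of $T$: for every $r>0$ there is $\kappa_r>0$ with $\operatorname{dist}(z,\Omega)\le\kappa_r\operatorname{dist}(0,T(z))$ for all $\|z\|\le r$. *)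

(* Defs.v *)
From HB Require Import structures.
From mathcomp Require Import all_boot all_order all_algebra.
From mathcomp Require Import all_classical all_reals.
From mathcomp Require Import ereal sequences.
Set Implicit Arguments. Unset Strict Implicit. Unset Printing Implicit Defensive.
Import Order.TTheory GRing.Theory Num.Theory.
Local Open Scope ring_scope.
Local Open Scope classical_set_scope.

(* X is modelled as R^n (row vectors) with the standard inner product. *)
Section Defs.
Variables (R : realType) (n : nat).
Implicit Types (u v z : 'rV[R]_n) (M : 'M[R]_n).

Definition ip u v : R := (u *m v^T) 0 0.
Definition normv z : R := Num.sqrt (ip z z).
Definition normM M z : R := Num.sqrt (ip z (z *m M)).

(* dist_N(x, A) = inf_{a in A} N(a - x), valued in \bar R (+oo if A empty) *)
Definition distE (N : 'rV[R]_n -> R) (x : 'rV[R]_n) (A : set 'rV[R]_n) : \bar R :=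
  ereal_inf [set (N (a - x))%:E | a in A].

Definition monotone_op (T : 'rV[R]_n -> set 'rV[R]_n) : Prop :=
  forall x y u v, T x u -> T y v -> 0 <= ip (x - y) (u - v).

Definition maximal_monotone (T : 'rV[R]_n -> set 'rV[R]_n) : Prop :=
  monotone_op T /\
  forall x u, (forall y v, T y v -> 0 <= ip (x - y) (u - v)) -> T x u.

Definition zeros (T : 'rV[R]_n -> set 'rV[R]_n) : set 'rV[R]_n :=
  [set z | T z 0].

Definition self_adjoint M : Prop := M^T = M.
Definition pos_def M : Prop := forall z, z != 0 -> 0 < ip z (z *m M).

(* p = J_{sigma M^{-1} T}(z), i.e. z \in p + sigma M^{-1} T(p) *)
Definition resolvent_pt M (T : 'rV[R]_n -> set 'rV[R]_n) (sigma : R) z p : Prop :=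
  exists v, T p v /\ z = p + sigma *: (v *m invmx M).

Definition IGPPAstep_out M (T : 'rV[R]_n -> set 'rV[R]_n)
  (z : 'rV[R]_n) (sigma eta delta gamma : R) (z' : 'rV[R]_n) : Prop :=
  exists w p, resolvent_pt M T sigma z p /\
    normM M (w - p) <= Num.min eta (delta * normM M (w - z)) /\
    z' = gamma *: w + (1 - gamma) *: z.

Definition rate (gamma kappa sigma delta : R) : R :=
  (1 - delta)^-1 *
  (Num.sqrt (1 - Num.min gamma (2 * gamma - gamma ^+ 2) * sigma ^+ 2
                 / (sigma ^+ 2 + kappa ^+ 2))
   + delta * (Num.min gamma 1 * kappa / Num.sqrt (sigma ^+ 2 + kappa ^+ 2) + 1)).
End Defs.

(* Main.v *)
Require Import Defs.
From HB Require Import structures.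
From mathcomp Require Import all_boot all_order all_algebra.
From mathcomp Require Import all_classical all_reals.
From mathcomp Require Import ereal sequences.
From mathcomp Require Import spectral sesquilinear complex.
From mathcomp Require Import ring lra.
Set Implicit Arguments. Unset Strict Implicit. Unset Printing Implicit Defensive.
Import Order.TTheory GRing.Theory Num.Theory Num.Def.
Local Open Scope ring_scope.
Local Open Scope sesquilinear_scope.

Section Spec.
Variables (R : realType) (n : nat).
Local Notation C := (R[i]).
Local Notation f := (real_complex R).

Lemma conjf (x : R) : conjC (f x) = f x.
Proof.
apply: conj_Creal; rewrite realE; have [h|h] := lerP 0 x.
  by rewrite ler0c h.
by rewrite orbC -[0 : C]/(f 0) lecR ltW.
Qed.

Lemma tcf m p (A : 'M[R]_(m,p)) : (map_mx f A) ^t* = map_mx f A^T.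
Proof. by apply/matrixP=> i j; rewrite !mxE conjf. Qed.

Lemma diag_form (y : 'rV[C]_n) (d : 'rV[C]_n) :
  (y *m diag_mx d *m y ^t*) 0 0 = \sum_j d 0 j * `|y 0 j| ^+ 2.
Proof.
rewrite mul_mx_diag mxE; apply: eq_bigr => j _.
by rewrite !mxE normCK mulrA [_ * d 0 j]mulrC.
Qed.

Lemma spectral_weights (M : 'M[R]_n) : M^T = M ->
  forall u : 'rV[R]_n, exists c w : 'I_n -> R,
   [/\ forall i, 0 <= w i, forall i, eigenvalue M (c i),
       ip u u = \sum_i w i, ip u (u *m M) = \sum_i c i * w i &
       ip (u *m M) (u *m M) = \sum_i c i ^+ 2 * w i].
Proof.
move=> Msym u.
pose Mc := map_mx f M.
have Mch : Mc ^t* = Mc by rewrite tcf Msym.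
have Mherm : Mc \is hermsymmx by apply/is_hermitianmxP; rewrite expr0 scale1r Mch.
have /orthomx_spectralP Mdec := hermitian_normalmx Mherm.
have Dreal := hermitian_spectral_diag_real Mherm.
set P := spectralmx Mc in Mdec; set D := spectral_diag Mc in Mdec Dreal.
have Pu : P \is unitarymx := spectral_unitarymx Mc.
have Punit : P \in unitmx := spectral_unit Mc.
have iP : invmx P = P ^t* := invmx_unitary Pu.
have PtP : P ^t* *m P = 1%:M by rewrite -iP mulVmx.
pose uc := map_mx f u.
pose y := uc *m P ^t*.
have key : forall d, (uc *m (P ^t* *m diag_mx d *m P) *m uc ^t*) 0 0
                      = \sum_j d 0 j * `|y 0 j| ^+ 2.
  move=> d; rewrite -diag_form /y !mulmxA; congr (_ 0 0).
  by rewrite trmx_mul map_mxM trmxCK !mulmxA.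
have tcM : forall (A B : 'M[C]_n), (A *m B) ^t* = B ^t* *m A ^t*.
  by move=> A B; rewrite trmx_mul map_mxM.
have tcMr : forall (A : 'rV[C]_n) (B : 'M[C]_n), (A *m B) ^t* = B ^t* *m A ^t*.
  by move=> A B; rewrite trmx_mul map_mxM.
have McE : Mc = P ^t* *m diag_mx D *m P by rewrite Mdec iP.
have eig : forall j, eigenvalue Mc (D 0 j).
  move=> j; apply/eigenvalueP; exists (delta_mx 0 j *m P).
    rewrite McE !mulmxA -[_ *m P *m P^t*]mulmxA.
    rewrite (unitarymxP Pu) mulmx1 scalemxAl; congr (_ *m P).
    apply/matrixP=> a b; rewrite mul_mx_diag !mxE.
    have [->|nb] := eqVneq b j; rewrite ?eqxx ?andbT ?andbF ?mulr0 ?mul0r //=.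
    by case: (_ == _); rewrite /= ?mulr1 ?mul1r ?mul0r ?mulr0.
  apply/negP => /eqP h.
  have : (delta_mx 0 j : 'rV[C]_n) *m P *m invmx P = 0 by rewrite h mul0mx.
  rewrite mulmxK // => /matrixP /(_ 0 j); rewrite !mxE !eqxx /= => /eqP.
  by rewrite oner_eq0.
have Dr : forall j, D 0 j = f (complex.Re (D 0 j)).
  move=> j; rewrite complexRe; apply/esym/Creal_ReP.
  exact: (mxOverP Dreal).
exists (fun j => complex.Re (D 0 j)), (fun j => complex.Re (`|y 0 j| ^+ 2)).
have nr : forall j, `|y 0 j| ^+ 2 = f (complex.Re (`|y 0 j| ^+ 2)).
  move=> j; rewrite complexRe; apply/esym/Creal_ReP.
  by rewrite realX ?normr_real.
have lift : forall a b : 'rV[R]_n, f (ip a b) = (map_mx f a *m (map_mx f b) ^t*) 0 0.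
  by move=> a b; rewrite tcf -map_mxM mxE.
split.
- move=> j; rewrite -lecR -nr; exact: exprn_ge0.
- by move=> j; have := eig j; rewrite {1}Dr /Mc eigenvalue_map.
- apply: (@complexI R); rewrite rmorph_sum lift.
  have -> : (map_mx f u *m (map_mx f u) ^t*) = uc *m (P ^t* *m diag_mx (const_mx 1) *m P) *m uc ^t*.
    by rewrite diag_const_mx mulmx1 PtP mulmx1.
  rewrite key; apply: eq_bigr => j _; rewrite mxE mul1r; exact: nr.
- apply: (@complexI R); rewrite rmorph_sum lift map_mxM -/uc -/Mc tcMr Mch mulmxA McE key.
  by apply: eq_bigr => j _; rewrite rmorphM {1}(nr j) {1}(Dr j).
- apply: (@complexI R); rewrite rmorph_sum lift !map_mxM -/uc -/Mc tcMr Mch mulmxA.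
  have -> : uc *m Mc *m Mc = uc *m (P ^t* *m diag_mx (\row_j (D 0 j * D 0 j)) *m P).
    by rewrite McE -!mulmxA; congr (_ *m _); rewrite !mulmxA -[_ *m P *m P^t*]mulmxA (unitarymxP Pu) mulmx1 -[_ *m diag_mx D *m diag_mx D]mulmxA mulmx_diag.
  rewrite key; apply: eq_bigr => j _.
  rewrite mxE rmorphM rmorphXn expr2; congr (_ * _); last exact: nr.
  by congr (_ * _); exact: Dr.
Qed.
End Spec.

Section Basic.
Variables (R : realType) (n : nat).
Implicit Types (u v w : 'rV[R]_n).

Lemma ipE u v : ip u v = \sum_j u 0 j * v 0 j.
Proof. by rewrite /ip mxE; apply: eq_bigr => j _; rewrite mxE. Qed.

Lemma ipC u v : ip u v = ip v u.
Proof. by rewrite !ipE; apply: eq_bigr => j _; rewrite mulrC. Qed.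

Lemma ipDl u v w : ip (u + v) w = ip u w + ip v w.
Proof. by rewrite !ipE -big_split; apply: eq_bigr => j _; rewrite mxE mulrDl. Qed.

Lemma ipZl (c : R) u w : ip (c *: u) w = c * ip u w.
Proof. by rewrite !ipE mulr_sumr; apply: eq_bigr => j _; rewrite mxE mulrA. Qed.

Lemma ipNl u w : ip (- u) w = - ip u w.
Proof. by rewrite -scaleN1r ipZl mulN1r. Qed.

Lemma ipBl u v w : ip (u - v) w = ip u w - ip v w.
Proof. by rewrite ipDl ipNl. Qed.

Lemma ipDr u v w : ip w (u + v) = ip w u + ip w v.
Proof. by rewrite ipC ipDl ![ip _ w]ipC. Qed.
Lemma ipZr (c : R) u w : ip w (c *: u) = c * ip w u.
Proof. by rewrite ipC ipZl ipC. Qed.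
Lemma ipBr u v w : ip w (u - v) = ip w u - ip w v.
Proof. by rewrite ipC ipBl ![ip _ w]ipC. Qed.
Lemma ip0r u : ip u 0 = 0.
Proof. by rewrite ipE big1 // => j _; rewrite mxE mulr0. Qed.

Lemma ipMT u v (M : 'M[R]_n) : ip u (v *m M) = ip (u *m M^T) v.
Proof. by rewrite /ip trmx_mul mulmxA. Qed.

Lemma ip_ge0 u : 0 <= ip u u.
Proof. by rewrite ipE sumr_ge0 // => j _; rewrite -expr2 sqr_ge0. Qed.

Lemma ip_gt0 u : u != 0 -> 0 < ip u u.
Proof.
move=> /eqP un0.
have [j hj] : exists j, u 0 j != 0.
  case: (pselect (exists j, u 0 j != 0)) => // h; exfalso; apply: un0.
  apply/rowP => j; rewrite mxE; case: (eqVneq (u 0 j) 0) => // hj.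
  by exfalso; apply: h; exists j.
rewrite ipE (bigD1 j) //=.
have h1 : 0 < u 0 j * u 0 j by rewrite -expr2 lt0r sqrf_eq0 hj sqr_ge0.
have h2 : 0 <= \sum_(i | i != j) u 0 i * u 0 i.
  by apply: sumr_ge0 => i _; rewrite -expr2 sqr_ge0.
lra.
Qed.

End Basic.

Section MNorm.
Variables (R : realType) (n : nat) (M : 'M[R]_n).
Hypotheses (Msym : M^T = M) (Mpd : pos_def M).
Implicit Types (u v w : 'rV[R]_n).
Local Notation mi u w := (ip u (w *m M)).
Local Notation nM := (normM M).

Lemma miC u w : mi u w = mi w u.
Proof. by rewrite ipMT Msym ipC. Qed.
Lemma miDr u v w : mi w (u + v) = mi w u + mi w v.
Proof. by rewrite mulmxDl ipDr. Qed.
Lemma miDl u v w : mi (u + v) w = mi u w + mi v w.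
Proof. by rewrite ipDl. Qed.
Lemma miBr u v w : mi w (u - v) = mi w u - mi w v.
Proof. by rewrite mulmxBl ipBr. Qed.
Lemma miBl u v w : mi (u - v) w = mi u w - mi v w.
Proof. by rewrite ipBl. Qed.
Lemma miZr (c : R) u w : mi w (c *: u) = c * mi w u.
Proof. by rewrite -scalemxAl ipZr. Qed.
Lemma miZl (c : R) u w : mi (c *: u) w = c * mi u w.
Proof. by rewrite ipZl. Qed.
Lemma mi0r u : mi u 0 = 0.
Proof. by rewrite mul0mx ip0r. Qed.

Lemma mi_ge0 u : 0 <= mi u u.
Proof.
have [->|/Mpd/ltW //] := eqVneq u 0.
by rewrite mi0r.
Qed.

Lemma nM_ge0 u : 0 <= nM u.
Proof. exact: sqrtr_ge0. Qed.

Lemma nM_sqr u : nM u ^+ 2 = mi u u.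
Proof. by rewrite sqr_sqrtr // mi_ge0. Qed.

Lemma mi_CS u w : mi u w ^+ 2 <= mi u u * mi w w.
Proof.
have [->|wn0] := eqVneq w 0.
  by rewrite !mi0r mulr0 expr0n.
have Qw := Mpd wn0.
set P := mi u w; set Qu := mi u u; set Q := mi w w in Qw *.
have e : mi (u - (P / Q) *: w) (u - (P / Q) *: w) = Qu - 2 * (P / Q) * P + (P / Q) ^+ 2 * Q.
  rewrite miBl !miBr !miZl !miZr -/P -/Qu -/Q [mi w u]miC -/P; ring.
have := mi_ge0 (u - (P / Q) *: w); rewrite e => h.
have t : P / Q * Q = P by rewrite divfK // gt_eqF.
nra.
Qed.

Lemma sqrt_le_sq (x y : R) : 0 <= y -> x ^+ 2 <= y ^+ 2 -> x <= y.
Proof. move=> y0 h; nra. Qed.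

Lemma mi_le u w : mi u w <= nM u * nM w.
Proof.
apply: sqrt_le_sq; first by rewrite mulr_ge0 ?nM_ge0.
by rewrite exprMn !nM_sqr mi_CS.
Qed.

Lemma nM_triangle u w : nM (u + w) <= nM u + nM w.
Proof.
apply: sqrt_le_sq; first by rewrite addr_ge0 ?nM_ge0.
rewrite nM_sqr miDl !miDr [mi w u]miC.
have := mi_le u w; have := nM_sqr u; have := nM_sqr w; nra.
Qed.

Lemma nMN u : nM (- u) = nM u.
Proof. by rewrite /normM mulNmx ipNl ipC ipNl opprK ipC. Qed.

Lemma nMB u w : nM (u - w) = nM (w - u).
Proof. by rewrite -nMN opprB. Qed.

Lemma nMZ (c : R) u : nM (c *: u) = `|c| * nM u.
Proof. by rewrite /normM miZl miZr mulrA -expr2 sqrtrM ?sqr_ge0 // sqrtr_sqr. Qed.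

Lemma nM_le_sq u (x : R) : 0 <= x -> mi u u <= x ^+ 2 -> nM u <= x.
Proof. by move=> x0 h; apply: sqrt_le_sq => //; rewrite nM_sqr. Qed.

End MNorm.

Lemma pd1 (R : realType) n : pos_def (1%:M : 'M[R]_n).
Proof. by move=> z zn0; rewrite mulmx1 ip_gt0. Qed.
Lemma normvE (R : realType) n (z : 'rV[R]_n) : normv z = normM 1%:M z.
Proof. by rewrite /normv /normM mulmx1. Qed.

Section Dist.
Variables (R : realType) (n : nat).
Local Open Scope classical_set_scope.
Local Open Scope ereal_scope.

Lemma distE_le (N : 'rV[R]_n -> R) x A a : A a -> distE N x A <= (N (a - x))%:E.
Proof. by move=> Aa; apply: ereal_inf_lbound; exists a. Qed.

Lemma distE_fin (N : 'rV[R]_n -> R) x A : (forall u, (0 <= N u)%R) -> A !=set0 ->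
  exists d : R, [/\ distE N x A = d%:E, (0 <= d)%R,
    (forall a, A a -> (d <= N (a - x))%R) &
    (forall y, (forall a, A a -> (y <= N (a - x))%R) -> (y <= d)%R)].
Proof.
move=> N0 [a0 Aa0].
have h0 : 0 <= distE N x A by apply/ereal_infP => _ [a _ <-]; rewrite lee_fin.
have h1 := @distE_le N x A a0 Aa0.
have fin : distE N x A \is a fin_num.
  by rewrite ge0_fin_numE // (le_lt_trans h1) // ltry.
exists (fine (distE N x A)); rewrite fineK //; split => //.
- by rewrite -lee_fin fineK.
- by move=> a Aa; rewrite -lee_fin fineK // (@distE_le N x A a).
- move=> y hy; rewrite -lee_fin fineK //; apply/ereal_infP => _ [a Aa <-].
  by rewrite lee_fin hy.
Qed.

Lemma glb_approx (d : R) (P : R -> Prop) :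
  (forall y, (forall z, P z -> (y <= z)%R) -> (y <= d)%R) ->
  forall e : R, (0 < e)%R -> exists z, P z /\ (z < d + e)%R.
Proof.
move=> glb e e0; case: (pselect (exists z, P z /\ (z < d + e)%R)) => // h.
have : (d + e <= d)%R.
  apply: glb => z Pz; rewrite leNgt; apply/negP => lt; apply: h; by exists z.
by rewrite gerDl leNgt e0.
Qed.

Lemma glb_approx2 (N : 'rV[R]_n -> R) x A (d : R) :
  (forall y, (forall a, A a -> (y <= N (a - x))%R) -> (y <= d)%R) ->
  forall e : R, (0 < e)%R -> exists a, A a /\ (N (a - x) < d + e)%R.
Proof.
move=> glb e e0; case: (pselect (exists a, A a /\ (N (a - x) < d + e)%R)) => // h.
have : (d + e <= d)%R.
  apply: glb => a Aa; rewrite leNgt; apply/negP => lt; apply: h; by exists a.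
by rewrite gerDl leNgt e0.
Qed.

End Dist.

Lemma miE2 (R : realType) n (M : 'M[R]_n) : M^T = M -> forall (a b : 'rV[R]_n) (c : R),
  ip (a + c *: b) ((a + c *: b) *m M) = ip a (a *m M) + 2 * c * ip a (b *m M) + c ^+ 2 * ip b (b *m M).
Proof.
move=> Ms a b c.
rewrite miDl !miDr !miZl !miZr [ip b (a *m M)](miC Ms); ring.
Qed.

Section Step.
Variables (R : realType) (n : nat) (T : 'rV[R]_n -> set 'rV[R]_n) (M : 'M[R]_n).
Hypotheses (Msym : M^T = M) (Mpd : pos_def M) (Tmm : maximal_monotone T).
Local Notation mi u w := (ip u (w *m M)).
Local Notation nM := (normM M).
Local Notation Om := (zeros T).

Lemma Munit : M \in unitmx.
Proof.
rewrite -row_free_unit -kermx_eq0; apply/negP => /negP kn0.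
have zn0 : nz_row (kermx M) != 0 by rewrite nz_row_eq0.
have := Mpd zn0; have /submxP [D ->] := nz_row_sub (kermx M).
by rewrite -mulmxA mulmx_ker mulmx0 ip0r ltxx.
Qed.

Lemma zeros_convex (a b : 'rV[R]_n) (t : R) : Om a -> Om b -> 0 <= t <= 1 ->
  Om (t *: a + (1 - t) *: b).
Proof.
move=> Oa Ob /andP[t0 t1]; case: Tmm => mon max; apply: max => y v Tyv.
have ha := mon _ _ _ _ Oa Tyv; have hb := mon _ _ _ _ Ob Tyv.
have -> : t *: a + (1 - t) *: b - y = t *: (a - y) + (1 - t) *: (b - y).
  by apply/rowP => j; rewrite !mxE; ring.
rewrite ipDl !ipZl; apply: addr_ge0; apply: mulr_ge0 => //; lra.
Qed.

End Step.

Lemma arith (R : realType) (g s k X B a h : R) : 0 < s -> 0 < k -> 0 < g < 2 ->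
  0 <= a -> 0 <= B -> 0 <= h ->
  a ^+ 2 * s ^+ 2 <= k ^+ 2 * B -> a ^+ 2 + B <= X ->
  (g <= 1 -> h ^+ 2 <= g * a ^+ 2 + (1 - g) * X) ->
  (1 < g -> h ^+ 2 <= X - (2 * g - g ^+ 2) * B) ->
  (1 < g -> h ^+ 2 <= a ^+ 2 + (1 - g) ^+ 2 * B) ->
  h ^+ 2 <= (1 - Num.min g (2 * g - g ^+ 2) * s ^+ 2 / (s ^+ 2 + k ^+ 2)) * X.
Proof.
move=> s0 k0 /andP[g0 g2] a0 B0 h0 hs haX c1 c2 c3.
set K := s ^+ 2 + k ^+ 2.
have K0 : 0 < K by rewrite /K; apply: ltr_wpDr; [exact: sqr_ge0 | exact: exprn_gt0].
have X0 : 0 <= X by nra.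
rewrite -(ler_pM2r K0).
have -> : (1 - Num.min g (2 * g - g ^+ 2) * s ^+ 2 / K) * X * K =
          (K - Num.min g (2 * g - g ^+ 2) * s ^+ 2) * X.
  by field; rewrite gt_eqF.
have [g1|g1] := lerP g 1.
  have -> : Num.min g (2 * g - g ^+ 2) = g.
    by apply/min_idPl; nra.
  have h1 := c1 g1.
  have ha : a ^+ 2 * K <= k ^+ 2 * X by rewrite /K; nra.
  rewrite /K in ha *; nra.
have -> : Num.min g (2 * g - g ^+ 2) = 2 * g - g ^+ 2.
  by apply/min_idPr; nra.
have h2 := c2 g1; have h3 := c3 g1.
set m := 2 * g - g ^+ 2.
have m0 : 0 < m by rewrite /m; nra.
have m1 : m <= 1 by rewrite /m; nra.
have s2 : 0 < s ^+ 2 by exact: exprn_gt0.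
have [hB|hB] := lerP (s ^+ 2 * X) (B * K).
  have t1 : h ^+ 2 * K <= (X - m * B) * K by rewrite ler_pM2r.
  have t2 : m * (s ^+ 2 * X) <= m * (B * K) by rewrite ler_pM2l.
  lra.
have e : k ^+ 2 + (1 - g) ^+ 2 * s ^+ 2 = K - m * s ^+ 2 by rewrite /K /m; ring.
have hh : h ^+ 2 * s ^+ 2 <= B * (K - m * s ^+ 2) by rewrite -e; nra.
have Km : 0 <= K - m * s ^+ 2 by rewrite /K; nra.
have hh2 : h ^+ 2 * s ^+ 2 * K <= s ^+ 2 * X * (K - m * s ^+ 2) by nra.
rewrite -(ler_pM2r s2); nra.
Qed.

Lemma rate_ge (R : realType) (g k s d : R) : 0 < s -> 0 < k -> 0 < g < 2 -> 0 <= d < 1 ->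
  Num.sqrt (1 - Num.min g (2 * g - g ^+ 2) * s ^+ 2 / (s ^+ 2 + k ^+ 2)) + g * (d / (1 - d))
  <= rate g k s d.
Proof.
move=> s0 k0 /andP[g0 g2] /andP[d0 d1].
set K := s ^+ 2 + k ^+ 2.
have K0 : 0 < K by rewrite /K; apply: ltr_wpDr; [exact: sqr_ge0 | exact: exprn_gt0].
set rh := Num.sqrt _.
set mu := Num.min g 1 * k / Num.sqrt K.
have mu0 : 0 <= mu.
  rewrite /mu mulr_ge0 ?invr_ge0 ?sqrtr_ge0 // mulr_ge0 ?ltW //.
  by case: (leP g 1) => _; lra.
have rh0 : 0 <= rh := sqrtr_ge0 _.
have rhg : g - 1 <= rh.
  have [g1|g1] := lerP g 1; first lra.
  have em : Num.min g (2 * g - g ^+ 2) = 2 * g - g ^+ 2 by apply/min_idPr; nra.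
  have sK : s ^+ 2 / K <= 1 by rewrite ler_pdivrMr // mul1r /K lerDl sqr_ge0.
  have m0 : 0 <= 2 * g - g ^+ 2 by nra.
  have h1 : (2 * g - g ^+ 2) * (s ^+ 2 / K) <= 2 * g - g ^+ 2.
    exact: ler_piMr.
  have arg0 : 0 <= 1 - Num.min g (2 * g - g ^+ 2) * s ^+ 2 / K by rewrite em -mulrA; nra.
  have := sqr_sqrtr arg0; rewrite -/rh em -mulrA => e.
  nra.
rewrite /rate -/K -/rh -/mu.
have d10 : 0 < 1 - d by lra.
rewrite -(ler_pM2l d10) mulVKf ?gt_eqF // mulrDr.
have -> : (1 - d) * (g * (d / (1 - d))) = g * d by field; rewrite gt_eqF.
nra.
Qed.

Lemma eps_le (R : realType) (X Y c : R) : 0 <= c ->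
  (forall e, 0 < e -> e <= 1 -> X <= Y + e * c) -> X <= Y.
Proof.
move=> c0 h; rewrite leNgt; apply/negP => YX.
pose e := Num.min 1 ((X - Y) / (2 * (c + 1))).
have c1 : 0 < 2 * (c + 1) by lra.
have e0 : 0 < e by rewrite lt_min ltr01 /= divr_gt0 // subr_gt0.
have e1 : e <= 1 by rewrite ge_min lexx.
have e2 : e <= (X - Y) / (2 * (c + 1)) by rewrite ge_min lexx orbT.
have e3 : e * (2 * (c + 1)) <= X - Y by rewrite -ler_pdivlMr.
have := h e e0 e1; nra.
Qed.

Lemma arg_ge0 (R : realType) (g k s : R) : 0 < s -> 0 < k -> 0 < g < 2 ->
  0 <= 1 - Num.min g (2 * g - g ^+ 2) * s ^+ 2 / (s ^+ 2 + k ^+ 2).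
Proof.
move=> s0 k0 /andP[g0 g2].
set K := s ^+ 2 + k ^+ 2.
have K0 : 0 < K by rewrite /K; apply: ltr_wpDr; [exact: sqr_ge0 | exact: exprn_gt0].
have sK : s ^+ 2 / K <= 1 by rewrite ler_pdivrMr // mul1r /K lerDl sqr_ge0.
have sK0 : 0 <= s ^+ 2 / K by rewrite divr_ge0 ?sqr_ge0 ?ltW.
have m0 : 0 <= Num.min g (2 * g - g ^+ 2).
  by case: (leP g (2 * g - g ^+ 2)) => _; [exact: ltW | clear -g0 g2; nra].
have m1 : Num.min g (2 * g - g ^+ 2) <= 1 by case: (leP g (2 * g - g ^+ 2)) => hh; clear -g0 g2 hh; nra.
rewrite -mulrA; nra.
Qed.

Lemma minle_l (R : realType) (x y : R) : Num.min x y <= x.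
Proof. by rewrite ge_min lexx. Qed.
Lemma minle_r (R : realType) (x y : R) : Num.min x y <= y.
Proof. by rewrite ge_min lexx orbT. Qed.

Local Close Scope sesquilinear_scope.
Local Open Scope classical_set_scope.
Lemma sq_le (R : realType) (x y : R) : 0 <= x -> x <= y -> x ^+ 2 <= y ^+ 2.
Proof. move=> x0 xy; nra. Qed.

Section Step2.
Variables (R : realType) (n : nat) (T : 'rV[R]_n -> set 'rV[R]_n) (M : 'M[R]_n).
Hypotheses (Msym : M^T = M) (Mpd : pos_def M) (Tmm : maximal_monotone T).
Local Notation mi u w := (ip u (w *m M)).
Local Notation nM := (normM M).
Local Notation Om := (zeros T).
Implicit Types (x p v w o z : 'rV[R]_n).

Lemma res_eq x p v (s : R) : x = p + s *: (v *m invmx M) -> (x - p) *m M = s *: v.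
Proof. by move=> ->; rewrite addrC addKr -scalemxAl mulmxKV // Munit. Qed.

Lemma step_mon x p v (s : R) w : 0 < s -> T p v -> x = p + s *: (v *m invmx M) ->
  Om w -> 0 <= mi (p - w) (x - p).
Proof.
move=> s0 Tpv hx Ow; rewrite (res_eq hx) ipZr; apply: mulr_ge0; first exact: ltW.
by case: Tmm => mon _; have := mon _ _ _ _ Tpv Ow; rewrite subr0.
Qed.

Lemma decomp x p w : mi (x - w) (x - w) = mi (p - w) (p - w) + 2 * mi (p - w) (x - p) + mi (x - p) (x - p).
Proof.
have -> : x - w = (p - w) + 1 *: (x - p) by apply/rowP => j; rewrite !mxE; ring.
by rewrite miE2 // mulr1 expr1n mul1r.
Qed.

Lemma zh_decomp x p w (g : R) :
  mi (g *: p + (1 - g) *: x - w) (g *: p + (1 - g) *: x - w) =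
  mi (p - w) (p - w) + 2 * (1 - g) * mi (p - w) (x - p) + (1 - g) ^+ 2 * mi (x - p) (x - p).
Proof.
have -> : g *: p + (1 - g) *: x - w = (p - w) + (1 - g) *: (x - p).
  by apply/rowP => j; rewrite !mxE; ring.
by rewrite miE2.
Qed.

Lemma fejer x z (s eta de g : R) w p v : 0 < s -> 0 < g < 2 ->
  T p v -> x = p + s *: (v *m invmx M) ->
  nM (w - p) <= Num.min eta (de * nM (w - x)) -> z = g *: w + (1 - g) *: x ->
  forall o, Om o -> nM (p - o) <= nM (x - o) /\ nM (z - o) <= nM (x - o) + g * eta.
Proof.
move=> s0 /andP[g0 g2] Tpv hx hw hz o Oo.
have C0 := step_mon s0 Tpv hx Oo.
have hd := decomp x p o.
have B0 := mi_ge0 Mpd (x - p).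
have X0 := mi_ge0 Mpd (x - o).
split.
  apply: (nM_le_sq Mpd); first exact: nM_ge0.
  rewrite (nM_sqr Mpd) hd; lra.
have -> : z - o = (g *: p + (1 - g) *: x - o) + g *: (w - p).
  by rewrite hz; apply/rowP => j; rewrite !mxE; ring.
apply: le_trans (nM_triangle Msym Mpd _ _) _.
rewrite nMZ gtr0_norm //; apply: lerD.
  apply: (nM_le_sq Mpd); first exact: nM_ge0.
  rewrite (nM_sqr Mpd) zh_decomp hd.
  have h1 : 0 <= g * (2 - g) by nra.
  clear -g0 g2 C0 B0 h1; nra.
rewrite ler_pM2l //; apply: le_trans hw _; exact: minle_l.
Qed.

Lemma rate_step x z (s eta de g k r : R) w p v :
  (forall u, ip (u *m M) (u *m M) <= mi u u) -> (forall u, mi u u <= ip u u) ->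
  Om !=set0 -> 0 < s -> 0 <= de < 1 -> 0 < g < 2 -> 0 < k ->
  T p v -> x = p + s *: (v *m invmx M) ->
  nM (w - p) <= Num.min eta (de * nM (w - x)) -> z = g *: w + (1 - g) *: x ->
  normv p <= r ->
  (forall y, normv y <= r -> (distE (@normv R n) y Om <= k%:E * distE (@normv R n) 0 (T y))%E) ->
  (distE nM z Om <= (rate g k s de)%:E * distE nM x Om)%E.
Proof.
move=> S1 S2 One s0 /andP[d0 d1] g02 k0 Tpv hx hw hz pr subreg.
have /andP[g0 g2] := g02.
have N0 : forall u, 0 <= nM u := fun u => sqrtr_ge0 _.
have E0 : forall u : 'rV[R]_n, 0 <= normv u := fun u => sqrtr_ge0 _.
have [dx [Ex dx0 dxlb dxglb]] := distE_fin x N0 One.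
have [dz [Ez dz0 dzlb dzglb]] := distE_fin z N0 One.
have [dp [Ep dp0 dplb dpglb]] := distE_fin p N0 One.
set zh := g *: p + (1 - g) *: x.
have [dh [Eh dh0 dhlb dhglb]] := distE_fin zh N0 One.
have [ep [Eep ep0 eplb epglb]] := distE_fin p E0 One.
rewrite Ez Ex -EFinM lee_fin.
have hv := res_eq hx.
have MON : forall o, Om o -> 0 <= mi (p - o) (x - p).
  by move=> o Oo; exact: step_mon s0 Tpv hx Oo.
set B := mi (x - p) (x - p).
have B0 : 0 <= B := mi_ge0 Mpd _.
have sB0 : 0 <= Num.sqrt B := sqrtr_ge0 _.
have nMle : forall u, nM u <= normv u by move=> u; apply: ler_wsqrtr; exact: S2.
have dpep : dp <= ep.
  by apply: epglb => a Oa; apply: le_trans (dplb a Oa) (nMle _).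
have epv : ep <= k * normv v.
  have := subreg p pr; rewrite Eep => h.
  have h2 := distE_le (@normv R n) 0 Tpv.
  have kE : (0 <= k%:E)%E by rewrite lee_fin ltW.
  have := le_trans h (lee_wpmul2l kE h2).
  by rewrite subr0 -EFinM lee_fin.
have vnorm : s * normv v = normv ((x - p) *m M).
  by rewrite hv !normvE nMZ gtr0_norm.
have vB : normv ((x - p) *m M) <= Num.sqrt B by apply: ler_wsqrtr; exact: S1.
have ha : dp * s <= k * Num.sqrt B.
  have : dp * s <= k * normv v * s by rewrite ler_pM2r //; apply: le_trans dpep epv.
  rewrite -mulrA [normv v * s]mulrC vnorm => h; apply: le_trans h _.
  by rewrite ler_pM2l.
have ha2 : dp ^+ 2 * s ^+ 2 <= k ^+ 2 * B.
  rewrite -exprMn -[B]sqr_sqrtr // -exprMn.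
  by apply: sq_le; [exact: mulr_ge0 dp0 (ltW s0) | exact: ha].
have rate0 : 0 <= rate g k s de.
  apply: le_trans (rate_ge s0 k0 g02 _); last by rewrite d0 d1.
  have hq : 0 <= de / (1 - de) by apply: divr_ge0 => //; lra.
  apply: addr_ge0; [exact: sqrtr_ge0 | exact: mulr_ge0 (ltW g0) hq].
apply: (eps_le rate0) => e e0 e1.
have [o0 [O0 ho0]] := glb_approx2 dxglb e0.
set X := mi (x - o0) (x - o0).
have X0 : 0 <= X := mi_ge0 Mpd _.
have sqXE : nM (o0 - x) = Num.sqrt X by rewrite nMB.
have hd := decomp x p o0.
have C0 := MON o0 O0.
have dpP0 : dp ^+ 2 <= mi (p - o0) (p - o0).
  rewrite -(nM_sqr Mpd); apply: sq_le => //.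
  by rewrite nMB; exact: dplb.
have dh_le : forall o, Om o -> dh ^+ 2 <= mi (zh - o) (zh - o).
  move=> o Oo; rewrite -(nM_sqr Mpd); apply: sq_le => //.
  by rewrite nMB; exact: dhlb.
have c2 : 1 < g -> dh ^+ 2 <= X - (2 * g - g ^+ 2) * B.
  move=> g1; apply: le_trans (dh_le _ O0) _.
  rewrite /zh zh_decomp /X hd -/B.
  have : 0 <= g * mi (p - o0) (x - p) by exact: mulr_ge0 (ltW g0) C0.
  nra.
have approx : forall e', 0 < e' -> e' <= 1 -> exists o, Om o /\
    mi (p - o) (p - o) <= dp ^+ 2 + e' * (2 * dp + 1).
  move=> e' e'0 e'1; have [o [Oo ho]] := glb_approx2 dpglb e'0.
  exists o; split => //; rewrite -(nM_sqr Mpd) nMB.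
  have h0 := N0 (o - p).
  have : nM (o - p) ^+ 2 <= (dp + e') ^+ 2.
    by apply: sq_le => //; exact: ltW.
  nra.
have c3 : 1 < g -> dh ^+ 2 <= dp ^+ 2 + (1 - g) ^+ 2 * B.
  move=> g1; apply: (@eps_le _ _ _ (2 * dp + 1)); first lra.
  move=> e' e'0 e'1; have [o [Oo ho]] := approx e' e'0 e'1.
  apply: le_trans (dh_le _ Oo) _.
  rewrite /zh zh_decomp -/B.
  have Co := MON o Oo.
  have : 0 <= (g - 1) * mi (p - o) (x - p) by apply: mulr_ge0 => //; lra.
  nra.
have c1 : g <= 1 -> dh ^+ 2 <= g * dp ^+ 2 + (1 - g) * X.
  move=> g1; apply: (@eps_le _ _ _ (2 * dp + 1)); first lra.
  move=> e' e'0 e'1; have [o [Oo ho]] := approx e' e'0 e'1.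
  have Oq : Om (g *: o + (1 - g) *: o0).
    by apply: zeros_convex => //; rewrite g1 ltW.
  apply: le_trans (dh_le _ Oq) _.
  have -> : zh - (g *: o + (1 - g) *: o0) = g *: (p - o) + (1 - g) *: (x - o0).
    by rewrite /zh; apply/rowP => j; rewrite !mxE; ring.
  rewrite miE2 // !miZl !miZr.
  have := mi_ge0 Mpd ((p - o) + (-1) *: (x - o0)).
  rewrite miE2 // -/X.
  set P' := mi (p - o) (p - o); set K' := mi (p - o) (x - o0).
  move=> hpos.
  have g1' : 0 <= g * (1 - g) by apply: mulr_ge0; lra.
  have : 0 <= g * (1 - g) * (P' + 2 * (-1) * K' + (-1) ^+ 2 * X) by exact: mulr_ge0.
  have : g * P' <= g * (dp ^+ 2 + e' * (2 * dp + 1)) by rewrite ler_pM2l.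
  move=> h1 h2.
  have h3 : g * (e' * (2 * dp + 1)) <= e' * (2 * dp + 1).
    by apply: ler_piMl => //; apply: mulr_ge0; lra.
  nra.
have key : dh ^+ 2 <= (1 - Num.min g (2 * g - g ^+ 2) * s ^+ 2 / (s ^+ 2 + k ^+ 2)) * X.
  apply: (arith s0 k0 g02 dp0 B0 dh0 ha2) => //.
  have : B + mi (p - o0) (p - o0) <= X by rewrite /X hd -/B; lra.
  lra.
set rh := Num.sqrt (1 - Num.min g (2 * g - g ^+ 2) * s ^+ 2 / (s ^+ 2 + k ^+ 2)).
have arg0 := arg_ge0 s0 k0 g02.
have rh0 : 0 <= rh := sqrtr_ge0 _.
have sX0 : 0 <= Num.sqrt X := sqrtr_ge0 _.
have dhle : dh <= rh * Num.sqrt X.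
  apply: sqrt_le_sq; first exact: mulr_ge0.
  by rewrite exprMn !sqr_sqrtr.
set W := nM (w - p).
have dzle : dz - g * W <= dh.
  apply: dhglb => a Oa.
  have := dzlb a Oa.
  have -> : a - z = (a - zh) + (- g) *: (w - p).
    by rewrite hz /zh; apply/rowP => j; rewrite !mxE; ring.
  move=> h; have := le_trans h (nM_triangle Msym Mpd _ _).
  rewrite nMZ normrN gtr0_norm //.
  rewrite -/W; lra.
have Wle : W * (1 - de) <= de * Num.sqrt B.
  have h1 : W <= de * nM (w - x) := le_trans hw (minle_r _ _).
  have h2 : nM (w - x) <= W + Num.sqrt B.
    have -> : w - x = (w - p) + (p - x) by rewrite addrA subrK.
    apply: le_trans (nM_triangle Msym Mpd _ _) _; rewrite [nM (p - x)]nMB; exact: lexx.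
  have h3 : de * nM (w - x) <= de * (W + Num.sqrt B) by apply: ler_wpM2l.
  nra.
have sBX : Num.sqrt B <= Num.sqrt X.
  apply: ler_wsqrtr; rewrite /X hd -/B.
  have := mi_ge0 Mpd (p - o0); lra.
have W2 : W <= de / (1 - de) * Num.sqrt X.
  have d10 : 0 < 1 - de by lra.
  rewrite -(ler_pM2r d10).
  have -> : de / (1 - de) * Num.sqrt X * (1 - de) = de * Num.sqrt X.
    by field; rewrite gt_eqF.
  by apply: le_trans Wle _; apply: ler_wpM2l.
have rg := rate_ge s0 k0 g02 (introT andP (conj d0 d1)).
rewrite -/rh in rg.
have : dz <= rate g k s de * Num.sqrt X.
  have : dz <= rh * Num.sqrt X + g * (de / (1 - de) * Num.sqrt X).
    have : g * W <= g * (de / (1 - de) * Num.sqrt X) by rewrite ler_pM2l.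
    lra.
  move=> h; apply: le_trans h _.
  rewrite mulrA -mulrDl; apply: ler_wpM2r => //.
have : Num.sqrt X <= dx + e by rewrite -sqXE ltW.
move=> h1 h2; apply: le_trans h2 _.
rewrite [e * _]mulrC -mulrDr; by apply: ler_wpM2l.
Qed.
End Step2.

Lemma spec_bounds (R : realType) n (M : 'M[R]_n) (lmin : R) : M^T = M ->
  0 < lmin -> (forall a, eigenvalue M a -> a <= 1) -> (forall a, eigenvalue M a -> lmin <= a) ->
  forall u : 'rV[R]_n,
  [/\ ip (u *m M) (u *m M) <= ip u (u *m M), ip u (u *m M) <= ip u u &
      lmin * ip u u <= ip u (u *m M)].
Proof.
move=> Ms l0 le1 gel u.
have [c [w [w0 ce -> -> ->]]] := @spectral_weights _ _ M Ms u.
have c1 : forall i, c i <= 1 by move=> i; exact: le1.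
have cl : forall i, lmin <= c i by move=> i; exact: gel.
split.
- apply: ler_sum => i _; rewrite expr2 -mulrA ler_piMl //.
    by rewrite mulr_ge0 // (le_trans (ltW l0)).
- by apply: ler_sum => i _; rewrite ler_piMl.
- by rewrite mulr_sumr; apply: ler_sum => i _; rewrite ler_wpM2r.
Qed.

Theorem theorem2 (R : realType) (n : nat) (T : 'rV[R]_n -> set 'rV[R]_n)
  (M : 'M[R]_n) (lmin : R)
  (z : nat -> 'rV[R]_n) (sigma eta delta : nat -> R) (gamma : R)
  (zbar0 : 'rV[R]_n) (r kappa : R) :
  maximal_monotone T ->
  zeros T !=set0 ->
  self_adjoint M -> pos_def M ->
  (* lambda_max(M) = 1 *)
  eigenvalue M 1 -> (forall a, eigenvalue M a -> a <= 1) ->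
  (* lmin = lambda_min(M) *)
  eigenvalue M lmin -> (forall a, eigenvalue M a -> lmin <= a) ->
  (forall k, 0 <= sigma k) -> (forall k, 0 <= eta k) -> (forall k, 0 <= delta k) ->
  (\sum_(k <oo) (eta k)%:E < +oo)%E ->
  (0 < ereal_inf (range (fun k => (sigma k)%:E)))%E ->
  (ereal_sup (range (fun k => (delta k)%:E)) < 1%:E)%E ->
  0 < gamma < 2 ->
  (forall k, IGPPAstep_out M T (z k) (sigma k) (eta k) (delta k) gamma (z k.+1)) ->
  (* zbar0 is a point of Omega nearest to z 0 in ||.||_M *)
  zeros T zbar0 ->
  (forall d, zeros T d -> normM M (zbar0 - z 0) <= normM M (d - z 0)) ->
  0 < r ->
  ((normv zbar0)%:E + (lmin^-1)%:E *
     (distE (normM M) (z 0%N) (zeros T) + gamma%:E * \sum_(k <oo) (eta k)%:E)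
   <= r%:E)%E ->
  0 < kappa ->
  (forall x, normv x <= r ->
     (distE (@normv R n) x (zeros T) <= kappa%:E * distE (@normv R n) 0 (T x))%E) ->
  forall k,
    (distE (normM M) (z k.+1) (zeros T)
     <= (rate gamma kappa (sigma k) (delta k))%:E * distE (normM M) (z k) (zeros T))%E.
Proof.
move=> Tmm One Msym Mpd _ le1 eigl gel hs0 he0 hd0 hsum hinf hsup g02 step Oz0 znear r0 hr k0 subreg k.
have /andP[g0 g2] := g02.
have spos : forall m, 0 < sigma m.
  move=> m; rewrite -lte_fin; apply: (lt_le_trans hinf); apply: ereal_inf_lbound; by exists m.
have dlt : forall m, delta m < 1.
  move=> m; rewrite -lte_fin; apply: le_lt_trans hsup; apply: ereal_sup_ubound; by exists m.
have l0 : 0 < lmin.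
  have /eigenvalueP [v hv vn0] := eigl.
  have := Mpd _ vn0; rewrite hv ipZr => h.
  have := ip_gt0 vn0 => h2.
  by rewrite (pmulr_lgt0 _ h2) in h.
have l1 : lmin <= 1 := le1 _ eigl.
have SB := spec_bounds Msym l0 le1 gel.
have S1 : forall u, ip (u *m M) (u *m M) <= ip u (u *m M) by move=> u; case: (SB u).
have S2 : forall u, ip u (u *m M) <= ip u u by move=> u; case: (SB u).
have S3 : forall u, lmin * ip u u <= ip u (u *m M) by move=> u; case: (SB u).
have S0 : (0 <= \sum_(k <oo) (eta k)%:E)%E by apply: nneseries_ge0 => i _ _; rewrite lee_fin.
have Sfin : (\sum_(k <oo) (eta k)%:E)%E \is a fin_num by rewrite ge0_fin_numE.
set S := fine (\sum_(k <oo) (eta k)%:E)%E.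
have SE : (\sum_(k <oo) (eta k)%:E)%E = S%:E by rewrite fineK.
have partial : forall m, \sum_(0 <= i < m) eta i <= S.
  move=> m; rewrite -lee_fin -SE -sumEFin.
  by apply: nneseries_lim_ge => i _ _; rewrite lee_fin.
have N0 : forall u, 0 <= normM M u := fun u => sqrtr_ge0 _.
have [d0 [E0 d00 d0lb d0glb]] := distE_fin (z 0%N) N0 One.
have d0E : d0 = normM M (zbar0 - z 0%N).
  apply/eqP; rewrite eq_le d0lb //=; exact/d0glb.
rewrite E0 SE in hr.
have hr' : normv zbar0 + lmin^-1 * (d0 + gamma * S) <= r.
  by rewrite -lee_fin EFinD EFinM EFinD EFinM.
have fej : forall m, normM M (z m - zbar0) <= normM M (z 0%N - zbar0) + gamma * \sum_(0 <= i < m) eta i.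
  elim=> [|m IH]; first by rewrite big_geq // mulr0 addr0.
  have [w [p [[v [Tpv hx]] [hw hz]]]] := step m.
  have [_ h] := fejer Msym Mpd Tmm (spos m) g02 Tpv hx hw hz Oz0.
  apply: le_trans h _; rewrite big_nat_recr //= mulrDr addrA lerD2r; exact: IH.
have [w [p [[v [Tpv hx]] [hw hz]]]] := step k.
have [hp _] := fejer Msym Mpd Tmm (spos k) g02 Tpv hx hw hz Oz0.
apply: (rate_step Msym Mpd Tmm S1 S2 One (spos k) _ g02 k0 Tpv hx hw hz _ subreg).
  by rewrite hd0 dlt.
have nv : forall u, normv u * lmin <= normM M u.
  move=> u; apply: sqrt_le_sq; first exact: N0.
  rewrite (nM_sqr Mpd) exprMn normvE (nM_sqr (@pd1 R n)) mulmx1.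
  have := S3 u; have := ip_ge0 u => h0 h3.
  have : 0 <= lmin * ip u u * (1 - lmin) by apply: mulr_ge0; [apply: mulr_ge0 => //; exact: ltW | lra].
  nra.
have tri : normv p <= normv zbar0 + normv (p - zbar0).
  rewrite !normvE; have := nM_triangle (@trmx1 _ n) (@pd1 R n) zbar0 (p - zbar0).
  by rewrite [zbar0 + _]addrC subrK.
apply: le_trans tri _; apply: le_trans hr'; rewrite lerD2l.
have h1 : normv (p - zbar0) <= lmin^-1 * normM M (p - zbar0).
  by rewrite ler_pdivlMl // mulrC nv.
apply: le_trans h1 _; rewrite ler_pM2l ?invr_gt0 //.
apply: le_trans hp _; apply: le_trans (fej k) _.
rewrite d0E nMB lerD2l ler_pM2l //.
Qed.
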